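(* Let $\mathfrak{B}$ be a finite cyclic group, of order at least $3$, of invertible diagonal $2\times2$ complex matrices, containing three pairwise linearly independent matrices. Let $n\ge3$ and let $F$ be a Boolean function of arity $2n$ such that every function of arity less than $2n$ realizable by a gadget of $\#(\{F\}\cup\mathfrak{B})$ lies in $\lambda\langle\mathfrak{B}\rangle$. Then either $F$ is the zero function, or there exist four distinct variables $x,y,z,w$ of $F$ such that $F^{xyzw}_{0000}$ is a nonzero function.
   Context: Matrices in $\mathfrak{B}$ are binary functions $M(u,v)=M_{uv}$. $\#\mathcal{G}$: input a finite multigraph whose vertices carry functions from $\mathcal{G}$ of arity equal to the degree (edges act as binary equality); output the sum over $\{0,1\}$-edge assignments of the product of vertex functions. Gadgets are such networks with dangling edges; realizable functions are their functions. $\langle\mathfrak{B}\rangle$ is the set of functions $x\mapsto\prod_{j=1}^m M_j(x_{\pi(2j-1)},x_{\pi(2j)})$ with $\pi$ a permutation of the $2m$ variables and $M_j\in\mathfrak{B}$; $\lambda\langle\mathfrak{B}\rangle=\{\lambda f:\lambda\in\mathbb{C},f\in\langle\mathfrak{B}\rangle\}$. $F^{xyzw}_{0000}$ is the arity-$(2n-4)$ function obtained from $F$ by fixing $x=y=z=w=0$. *)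

(* Defs.v *)
(* Complex numbers are modelled as R[i] = complex R for
   R : realType (any realType is the field of real numbers). *)
From HB Require Import structures.
From mathcomp Require Import all_boot all_order all_algebra all_fingroup.
From mathcomp Require Import complex.
From mathcomp Require Import reals.
Set Implicit Arguments.
Unset Strict Implicit.
Unset Printing Implicit Defensive.
Import Order.TTheory GRing.Theory Num.Theory.
Local Open Scope ring_scope.

Section Holant.
Variable C : fieldType.

Definition sig (k : nat) := {ffun 'I_k -> bool} -> C.

Definition bo (b : bool) : 'I_2 := @inord 1 b.

Definition mxfun (M : 'M[C]_2) (u v : bool) : C := M (bo u) (bo v).

Lemma ordl_proof m (j : 'I_m) : (j.*2 < m.*2)%N.
Proof. by rewrite ltn_double. Qed.
Lemma ordr_proof m (j : 'I_m) : (j.*2.+1 < m.*2)%N.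
Proof. by rewrite -doubleS leq_double. Qed.
(* the variables with (1-based) indices 2j-1 and 2j, for 0-based j *)
Definition ordl m (j : 'I_m) : 'I_(m.*2) := Ordinal (ordl_proof j).
Definition ordr m (j : 'I_m) : 'I_(m.*2) := Ordinal (ordr_proof j).

(* f in <B>: f(x) = prod_{j=1}^m M_j(x_{pi(2j-1)}, x_{pi(2j)}),
   pi a permutation (bijection) of the 2m variables, M_j in B. *)
Definition inBrack (B : seq 'M[C]_2) (k : nat) (f : sig k) : Prop :=
  exists m : nat, exists pi : 'I_(m.*2) -> 'I_k, exists Ms : 'I_m -> 'M[C]_2,
    k = m.*2 /\ bijective pi /\ (forall j, Ms j \in B) /\
    forall x : {ffun 'I_k -> bool},
      f x = \prod_(j < m) mxfun (Ms j) (x (pi (ordl j))) (x (pi (ordr j))).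

Definition inLamBrack (B : seq 'M[C]_2) (k : nat) (g : sig k) : Prop :=
  exists lam : C, exists f : sig k,
    inBrack B f /\ forall x, g x = lam * f x.

Section Gadget.
Variables (N : nat) (F : sig N) (B : seq 'M[C]_2).
Variables (nv : nat) (kind : 'I_nv -> option 'M[C]_2).
(* kind v = None : vertex labelled F (degree N);
   kind v = Some M : vertex labelled by the matrix M (degree 2). *)

Definition deg (v : 'I_nv) : nat :=
  match kind v with Some _ => 2 | None => N end.

(* half-edges: pairs (v, i) with i < deg v *)
Definition HE := {v : 'I_nv & 'I_(deg v)}.

Definition vfun (v : 'I_nv) : sig (deg v) :=
  match kind v as o
    return sig (match o with Some _ => 2 | None => N end) with
  | Some M => fun y => mxfun M (y ord0) (y ord_max)
  | None => F
  end.

Variables (k : nat) (mate : HE -> HE) (ext : 'I_k -> HE).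
(* ext j : the half-edge of the j-th dangling edge;
   mate : pairs the remaining half-edges into (internal) edges. *)

Definition gadget_wf : Prop :=
  (forall v M, kind v = Some M -> M \in B) /\
  injective ext /\
  (forall h : HE, h \notin codom ext ->
     [/\ mate h != h, mate (mate h) = h & mate h \notin codom ext]).

(* sum over {0,1}-assignments to the edges (an assignment to half-edges
   constant on each internal edge, and equal to x on dangling edges) of the
   product of the vertex functions *)
Definition gadget_val (x : {ffun 'I_k -> bool}) : C :=
  \sum_(s : {ffun HE -> bool} |
        [forall h, (h \notin codom ext) ==> (s (mate h) == s h)] &&
        [forall j, s (ext j) == x j])
    \prod_(v < nv) @vfun v [ffun i => s (@Tagged _ v (fun w => 'I_(deg w)) i)].

End Gadget.

Definition realizable N (F : sig N) (B : seq 'M[C]_2) (k : nat) (g : sig k)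
  : Prop :=
  exists nv (kind : 'I_nv -> option 'M[C]_2)
         (mate : HE N kind -> HE N kind) (ext : 'I_k -> HE N kind),
    gadget_wf B mate ext /\ forall x, g x = gadget_val F mate ext x.

Definition lin_indep2 (A A' : 'M[C]_2) : Prop :=
  forall a b : C, a *: A + b *: A' = 0 -> a = 0 /\ b = 0.

(* B (as a duplicate-free list) is a finite cyclic group of invertible
   diagonal 2x2 matrices: B = { g^i : i in nat } for a generator g. *)
Definition finite_cyclic_diag_group (B : seq 'M[C]_2) : Prop :=
  uniq B /\
  (forall M, M \in B -> is_diag_mx M /\ M \in unitmx) /\
  exists g : 'M[C]_2, forall M, M \in B <-> exists i : nat, M = g ^+ i.

End Holant.

(* Main.v *)
Require Import Defs.
From HB Require Import structures.
From mathcomp Require Import all_boot all_order all_algebra all_fingroup.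
From mathcomp Require Import complex.
From mathcomp Require Import reals.
From mathcomp Require Import ring zify.
From Stdlib Require Import Classical.
Set Implicit Arguments. Unset Strict Implicit. Unset Printing Implicit Defensive.
Import Order.TTheory GRing.Theory Num.Theory.
Local Open Scope ring_scope.

Definition kindM (C : fieldType) (M : 'M[C]_2) (v : 'I_2) : option 'M[C]_2 :=
  if val v is 0%N then None else Some M.

Definition he0 (C : fieldType) N (M : 'M[C]_2) (t : 'I_N) : HE N (kindM M) :=
  @Tagged 'I_2 ord0 (fun v => 'I_(deg N (kindM M) v)) t.
Definition he1 (C : fieldType) N (M : 'M[C]_2) (b : 'I_2) : HE N (kindM M) :=
  @Tagged 'I_2 ord_max (fun v => 'I_(deg N (kindM M) v)) b.

Definition toS (C : fieldType) N (M : 'M[C]_2) (i : 'I_N) (h : HE N (kindM M))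
  : 'I_N + 'I_2 :=
  if val (tag h) == 0%N then inl (insubd i (val (tagged h)))
  else inr (inord (val (tagged h))).

Lemma toS0 (C : fieldType) N (M : 'M[C]_2) (i t : 'I_N) : toS i (he0 M t) = inl t.
Proof. by rewrite /toS /= valKd. Qed.
Lemma toS1 (C : fieldType) N (M : 'M[C]_2) (i : 'I_N) b : toS i (he1 N M b) = inr b.
Proof. by rewrite /toS /= inord_val. Qed.

Lemma HEcases (C : fieldType) N (M : 'M[C]_2) (h : HE N (kindM M)) :
  (exists t, h = he0 M t) \/ (exists b, h = he1 N M b).
Proof.
case: h => v; case: v => [[|[|m]] hv] t.
- left; move: t; have -> : Ordinal hv = ord0 by apply/val_inj.
  by move=> t; exists t.
- right; move: t; have -> : Ordinal hv = ord_max by apply/val_inj.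
  by move=> t; exists t.
- by [].
Qed.
Lemma he0_inj (C : fieldType) N (M : 'M[C]_2) : injective (@he0 C N M).
Proof. by move=> a b /(congr1 (toS a)); rewrite !toS0 => -[]. Qed.
Lemma he01 (C : fieldType) N (M : 'M[C]_2) (t : 'I_N) b : (he0 M t == he1 N M b) = false.
Proof. by apply/eqP => /(congr1 (toS t)); rewrite toS0 toS1. Qed.
Lemma he00 (C : fieldType) N (M : 'M[C]_2) (t u : 'I_N) : (he0 M t == he0 M u) = (t == u).
Proof. by apply/eqP/eqP => [/he0_inj|->]. Qed.

Lemma he11 (C : fieldType) N (M : 'M[C]_2) (t u : 'I_2) : (he1 N M t == he1 N M u) = (t == u).
Proof. apply/eqP/eqP => [|->] //. move/(congr1 (fun h : HE N (kindM M) => nat_of_ord (tagged h))) => /= e; exact/val_inj. Qed.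

Definition mateG (C : fieldType) N (M : 'M[C]_2) (i j : 'I_N) (h : HE N (kindM M)) :=
  if h == he0 M i then he1 N M ord0 else if h == he0 M j then he1 N M ord_max
  else if h == he1 N M ord0 then he0 M i else if h == he1 N M ord_max then he0 M j
  else h.

Definition extG (C : fieldType) N (M : 'M[C]_2) K (pos : 'I_K -> 'I_N) (t : 'I_K) :=
  he0 M (pos t).

Definition aG N K (pos : 'I_K -> 'I_N) (i j : 'I_N) (x : {ffun 'I_K -> bool}) (c d : bool)
  : {ffun 'I_N -> bool} :=
  [ffun u => if u == i then c else if u == j then d else [exists t, (pos t == u) && x t]].

Definition posP N K (pos : 'I_K -> 'I_N) (i j : 'I_N) :=
  [/\ injective pos, forall t, pos t != i /\ pos t != j &
      forall u, u != i -> u != j -> exists t, pos t = u].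

Lemma aG_pos N K (pos : 'I_K -> 'I_N) i j x c d t : posP pos i j ->
  aG pos i j x c d (pos t) = x t.
Proof.
case=> inj hij _; rewrite ffunE; have [/negbTE -> /negbTE ->] := hij t.
apply/existsP/idP => [[t' /andP[/eqP/inj -> //]]|xt]; by exists t; rewrite eqxx.
Qed.

Lemma notin0 (C : fieldType) N (M : 'M[C]_2) K (pos : 'I_K -> 'I_N) u :
  (forall t, pos t != u) -> he0 M u \notin codom (extG M pos).
Proof.
move=> h; apply/codomP => -[t /he0_inj e]; by move: (h t); rewrite -e eqxx.
Qed.
Lemma notin1 (C : fieldType) N (M : 'M[C]_2) K (pos : 'I_K -> 'I_N) (u : 'I_N) b :
  he1 N M b \notin codom (extG M pos).
Proof.
apply/codomP => -[t /eqP]; by rewrite /extG eq_sym he01.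
Qed.

Lemma wfG (C : fieldType) N (M : 'M[C]_2) B K (pos : 'I_K -> 'I_N) i j :
  i != j -> M \in B -> posP pos i j -> gadget_wf B (@mateG C N M i j) (@extG C N M K pos).
Proof.
move=> hij MB [inj hpos sur]; split; [|split].
- by move=> v M'; rewrite /kindM; case: (val v) => // _ [<-].
- by move=> a b /he0_inj /inj.
have ne0 : (ord0 : 'I_2) != ord_max by [].
have u0 := i. have nij : j == i = false by apply/negbTE; rewrite eq_sym.
move=> h; have [[t ->]|[b ->]] := HEcases h => hn.
- have [ti|tj] : t = i \/ t = j.
    case: (eqVneq t i) => [->|ti]; first by left.
    case: (eqVneq t j) => [->|tj]; first by right.
    have [t' et] := sur t ti tj; case/codomP: hn; exists t'. by rewrite /extG et.
  + subst t; rewrite /mateG !eqxx /=; rewrite ?he11 ?eqxx /=; split => //; first [exact: (@notin1 C N M K pos u0 _) | apply: notin0 => t'; case: (hpos t') => // ? ?; by rewrite eq_sym].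
  + subst t; rewrite /mateG he00 nij eqxx /=; rewrite ?he11 ?eqxx /=; split => //; first [exact: (@notin1 C N M K pos u0 _) | apply: notin0 => t'; case: (hpos t') => // ? ?; by rewrite eq_sym].
- clear hn; have [b0|b1] : b = ord0 \/ b = ord_max.
    by case: b => [[|[|m]] hb] //; [left|right]; apply: val_inj.
  + subst b; rewrite /mateG /= ?he00 ?eqxx /=; rewrite ?he11 ?eqxx /=; split => //; first [exact: (@notin1 C N M K pos u0 _) | apply: notin0 => t'; case: (hpos t') => // ? ?; by rewrite eq_sym].
  + subst b; rewrite /mateG /= ?he00 ?nij ?eqxx /=; rewrite ?he11 ?eqxx /= ?he00 ?nij; split => //; first [exact: (@notin1 C N M K pos u0 _) | apply: notin0 => t'; case: (hpos t') => // ? ?; by rewrite eq_sym].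
Qed.

Definition SG (C : fieldType) N (M : 'M[C]_2) K (pos : 'I_K -> 'I_N) (i j : 'I_N) (x : {ffun 'I_K -> bool}) (c d : bool) :
  {ffun HE N (kindM M) -> bool} :=
  [ffun h => match toS i h with inl u => aG pos i j x c d u
             | inr b => if b == ord0 then c else d end].

Lemma prodG (C : fieldType) N (F : sig C N) (M : 'M[C]_2) (s : {ffun HE N (kindM M) -> bool}) :
  \prod_(v < 2) @vfun C N F 2 (kindM M) v [ffun i1 => s (Tagged (fun w : 'I_2 => 'I_(deg N (kindM M) w)) i1)]
  = F [ffun t => s (he0 M t)] * mxfun M (s (he1 N M ord0)) (s (he1 N M ord_max)).
Proof.
rewrite big_ord_recl big_ord1.
have -> : lift ord0 ord0 = ord_max :> 'I_2 by apply: val_inj.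
congr (_ * _); rewrite /vfun /= ?ffunE //.
Qed.

Lemma SG0 (C : fieldType) N (M : 'M[C]_2) K (pos : 'I_K -> 'I_N) (i j : 'I_N) (x : {ffun 'I_K -> bool}) c d t :
  SG M pos i j x c d (he0 M t) = aG pos i j x c d t.
Proof. by rewrite ffunE toS0. Qed.
Lemma SG1 (C : fieldType) N (M : 'M[C]_2) K (pos : 'I_K -> 'I_N) (i j : 'I_N) (x : {ffun 'I_K -> bool}) c d :
  SG M pos i j x c d (he1 N M ord0) = c /\ SG M pos i j x c d (he1 N M ord_max) = d.
Proof. by rewrite !ffunE !toS1. Qed.

Lemma keyG (C : fieldType) N (M : 'M[C]_2) K (pos : 'I_K -> 'I_N) (i j : 'I_N) (x : {ffun 'I_K -> bool}) c d
  (s : {ffun HE N (kindM M) -> bool}) :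
  i != j -> posP pos i j ->
  [forall h, (h \notin codom (extG M pos)) ==> (s (mateG i j h) == s h)] &&
  [forall j1, s (extG M pos j1) == x j1] && ((s (he0 M i), s (he0 M j)) == (c, d))
  = (s == SG M pos i j x c d).
Proof.
move=> hij pP; have [inj hpos sur] := pP.
have nij : j == i = false by apply/negbTE; rewrite eq_sym.
have [S10 S11] := SG1 M pos i j x c d.
have ni0 : he0 M i \notin codom (extG M pos).
  by apply: notin0 => t; case: (hpos t).
have nj0 : he0 M j \notin codom (extG M pos).
  by apply: notin0 => t; case: (hpos t).
apply/idP/eqP.
- case/andP => /andP [/forallP H1 /forallP H2] /eqP [si sj].
  have m0 := H1 (he0 M i); rewrite ni0 /mateG he00 eqxx /= in m0.
  have m1 := H1 (he0 M j); rewrite nj0 /mateG he00 nij eqxx /= in m1.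
  apply/ffunP => h; have [[t ->]|[b ->]] := HEcases h.
  + rewrite SG0 ffunE.
    case: (eqVneq t i) => [->|ti]; first by rewrite ?eqxx si.
    case: (eqVneq t j) => [->|tj]; first by rewrite ?nij ?eqxx sj.
    have [t' <-] := sur t ti tj.
    move/eqP: (H2 t') => /= ->; apply/idP/existsP => [xt|[t'' /andP[/eqP/inj -> //]]].
    by exists t'; rewrite eqxx.
  + have [b0|b1] : b = ord0 \/ b = ord_max.
      by case: b => [[|[|m]] hb] //; [left|right]; apply: val_inj.
    * by subst b; rewrite S10 -si (eqP m0).
    * by subst b; rewrite S11 -sj (eqP m1).
- move=> ->; rewrite !SG0 !ffunE eqxx nij eqxx /= eqxx andbT.
  apply/andP; split.
  + apply/forallP => h; apply/implyP => hn.
    have [[t et]|[b ->]] := HEcases h.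
    * subst h; have [ti|tj] : t = i \/ t = j.
        case: (eqVneq t i) => [->|ti]; first by left.
        case: (eqVneq t j) => [->|tj]; first by right.
        have [t' et] := sur t ti tj; case/codomP: hn; exists t'. by rewrite /extG et.
      - by subst t; rewrite /mateG eqxx S10 SG0 ffunE eqxx.
      - by subst t; rewrite /mateG he00 nij eqxx S11 SG0 ffunE nij eqxx.
    * have [b0|b1] : b = ord0 \/ b = ord_max.
        by case: b {hn} => [[|[|m]] hb] //; [left|right]; apply: val_inj.
      - by subst b; rewrite /mateG /= ?he00 ?he11 ?eqxx /= S10 SG0 ffunE eqxx.
      - by subst b; rewrite /mateG /= ?he00 ?he11 ?eqxx /= ?he00 ?nij S11 SG0 ffunE nij eqxx.
  + apply/forallP => t; rewrite /extG SG0 aG_pos //.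
Qed.

Lemma valG (C : fieldType) N (F : sig C N) (M : 'M[C]_2) K (pos : 'I_K -> 'I_N) i j :
  i != j -> is_diag_mx M -> posP pos i j -> forall x,
  gadget_val F (@mateG C N M i j) (@extG C N M K pos) x =
  mxfun M false false * F (aG pos i j x false false) +
  mxfun M true true * F (aG pos i j x true true).
Proof.
move=> hij dM pP x; rewrite /gadget_val.
rewrite (partition_big (fun s : {ffun HE N (kindM M) -> bool} => (s (he0 M i), s (he0 M j))) predT) //=.
rewrite (eq_bigr (fun cd : bool * bool => F (aG pos i j x cd.1 cd.2) * mxfun M cd.1 cd.2)); last first.
  case=> c d _; rewrite (eq_bigl (pred1 (SG M pos i j x c d))); last first.
    by move=> s; rewrite /= keyG.
  rewrite big_pred1_eq prodG; have [-> ->] := SG1 M pos i j x c d; congr (F _ * _).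
  by apply/ffunP => t; rewrite ffunE SG0.
rewrite -(pair_big predT predT (fun c d => F (aG pos i j x c d) * mxfun M c d)) /=.
rewrite !big_bool /=.
have z : forall c, mxfun M c (~~ c) = 0.
  move=> c; rewrite /mxfun; apply/eqP; move/forallP: dM => /(_ (bo c)) /forallP /(_ (bo (~~ c))) /implyP; apply.
  by rewrite /bo !inordK //; case: c.
by rewrite (z true) (z false) !mulr0 add0r addr0 addrC !(mulrC (F _)).
Qed.

Lemma realG (C : fieldType) N (F : sig C N) B (M : 'M[C]_2) K (pos : 'I_K -> 'I_N) i j :
  i != j -> M \in B -> is_diag_mx M -> posP pos i j ->
  realizable F B (fun x : {ffun 'I_K -> bool} =>
    mxfun M false false * F (aG pos i j x false false) +
    mxfun M true true * F (aG pos i j x true true)).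
Proof.
move=> hij MB dM pP.
exists 2, (kindM M), (@mateG C N M i j), (@extG C N M K pos); split.
  exact: wfG.
by move=> x; rewrite valG.
Qed.

Lemma posE N (i j : 'I_N) : i != j -> exists pos : 'I_N.-2 -> 'I_N, posP pos i j.
Proof.
case: N i j => [|[|N]] i j; first by case: i.
  by rewrite !ord1.
move=> hij; have [j' ej] : exists j' : 'I_N.+1, j = lift i j'.
  case: (unliftP i j) => [j' ->|ej]; first by exists j'.
  by rewrite ej eqxx in hij.
exists (fun t => lift i (lift j' t)); split.
- by move=> a b /lift_inj /lift_inj.
- move=> t; rewrite eq_sym neq_lift; split => //; rewrite ej.
  apply/eqP => /lift_inj /eqP; by rewrite eq_sym (negbTE (neq_lift _ _)).
- move=> u ui uj; case: (unliftP i u) => [u1 eu|eu]; last by rewrite eu eqxx in ui.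
  case: (unliftP j' u1) => [t et|et]; first by exists t; rewrite eu et.
  by rewrite eu et -ej eqxx in uj.
Qed.

Lemma brack0 (C : fieldType) B k (f : sig C k) :
  (forall M, M \in B -> is_diag_mx M /\ M \in unitmx) ->
  inBrack B f -> f [ffun => false] != 0.
Proof.
move=> HB [m [pi [Ms [ek [bij [inB ->]]]]]].
apply/prodf_neq0 => t _; rewrite !ffunE /mxfun.
have [dM uM] := HB _ (inB t).
move: uM; rewrite unitmxE unitfE; apply: contra => /eqP e.
have E0 : bo false = ord0 by apply: val_inj; rewrite /= inordK.
rewrite E0 in e; rewrite (expand_det_row _ ord0) big_ord_recl big_ord1.
rewrite e mul0r add0r.
move/forallP: dM => /(_ ord0) /forallP /(_ (lift ord0 ord0)) /implyP /(_ isT) /eqP ->.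
by rewrite mul0r.
Qed.

Lemma bo0 : bo false = ord0. Proof. by apply: val_inj; rewrite /= inordK. Qed.
Lemma bo1 : bo true = ord_max. Proof. by apply: val_inj; rewrite /= inordK. Qed.

Lemma diag_off (C : fieldType) (M : 'M[C]_2) : is_diag_mx M ->
  M ord0 ord_max = 0 /\ M ord_max ord0 = 0.
Proof.
move/forallP=> dM; split.
  by move/forallP: (dM ord0) => /(_ ord_max) /implyP /(_ isT) /eqP.
by move/forallP: (dM ord_max) => /(_ ord0) /implyP /(_ isT) /eqP.
Qed.

Lemma diag00 (C : fieldType) (M : 'M[C]_2) : is_diag_mx M -> M \in unitmx ->
  mxfun M false false != 0.
Proof.
move=> dM; rewrite unitmxE unitfE /mxfun bo0; apply: contra => /eqP e.
rewrite (expand_det_row _ ord0) big_ord_recl big_ord1 e mul0r add0r.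
have -> : lift ord0 ord0 = ord_max :> 'I_2 by apply: val_inj.
by rewrite (diag_off dM).1 mul0r.
Qed.

Lemma solve2 (C : fieldType) (M1 M2 : 'M[C]_2) : is_diag_mx M1 -> is_diag_mx M2 ->
  mxfun M1 false false != 0 -> lin_indep2 M1 M2 -> forall X Y,
  mxfun M1 false false * X + mxfun M1 true true * Y = 0 ->
  mxfun M2 false false * X + mxfun M2 true true * Y = 0 -> X = 0 /\ Y = 0.
Proof.
move=> d1 d2 p1n ind X Y e1 e2.
set p1 := mxfun M1 false false in p1n e1 *; set q1 := mxfun M1 true true in e1 *.
set p2 := mxfun M2 false false in e2 *; set q2 := mxfun M2 true true in e2 *.
have det0 : p1 * q2 - p2 * q1 != 0.
  apply/eqP => dz.
  have H0 : p2 *: M1 + (- p1) *: M2 = 0.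
    apply/matrixP => r s; rewrite !mxE.
    case: r => [[|[|?]] hr] //; case: s => [[|[|?]] hs] //.
    - have -> : Ordinal hr = ord0 by apply: val_inj.
      have -> : Ordinal hs = ord0 by apply: val_inj.
      by rewrite /p1 /p2 /mxfun bo0 mulNr mulrC subrr.
    - have -> : Ordinal hr = ord0 by apply: val_inj.
      have -> : Ordinal hs = ord_max by apply: val_inj.
      by rewrite (diag_off d1).1 (diag_off d2).1 !mulr0 ?oppr0 addr0.
    - have -> : Ordinal hr = ord_max by apply: val_inj.
      have -> : Ordinal hs = ord0 by apply: val_inj.
      by rewrite (diag_off d1).2 (diag_off d2).2 !mulr0 ?oppr0 addr0.
    - have -> : Ordinal hr = ord_max by apply: val_inj.
      have -> : Ordinal hs = ord_max by apply: val_inj.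
      move: dz; rewrite /q1 /q2 /mxfun bo1 => dz.
      by rewrite -[RHS]oppr0 -dz; ring.
  have [_ b0] := ind _ _ H0.
  by move: p1n; rewrite -oppr_eq0 b0 eqxx.
have eX : X * (p1 * q2 - p2 * q1) = q2 * (p1 * X + q1 * Y) - q1 * (p2 * X + q2 * Y).
  by ring.
have eY : Y * (p1 * q2 - p2 * q1) = p1 * (p2 * X + q2 * Y) - p2 * (p1 * X + q1 * Y).
  by ring.
rewrite e1 e2 !mulr0 subrr in eX eY.
by split; apply/eqP; rewrite -(mulIr_eq0 _ (mulIf det0)) ?eX ?eY.
Qed.

Lemma zeroF (C : fieldType) n (F : sig C (n.*2)) (K : nat) (pos : 'I_K -> 'I_(n.*2)) i j :
  (4 <= K)%N -> posP pos i j ->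
  ~ (exists x y z w : 'I_(n.*2),
    [/\ uniq [:: x; y; z; w] &
      exists a : {ffun 'I_(n.*2) -> bool},
        [/\ a x = false, a y = false, a z = false, a w = false & F a != 0]]) ->
  forall b : {ffun 'I_(n.*2) -> bool}, (forall t : 'I_K, (val t < 4)%N -> b (pos t) = false) -> F b = 0.
Proof.
move=> K4 [inj _ _] nex b hb; apply/eqP; apply: contraT => Fb; exfalso; apply: nex.
have l0 : (0 < K)%N by apply: leq_trans K4.
have l1 : (1 < K)%N by apply: leq_trans K4.
have l2 : (2 < K)%N by apply: leq_trans K4.
have l3 : (3 < K)%N by apply: leq_trans K4.
exists (pos (Ordinal l0)), (pos (Ordinal l1)), (pos (Ordinal l2)), (pos (Ordinal l3)); split.
  have -> : [:: pos (Ordinal l0); pos (Ordinal l1); pos (Ordinal l2); pos (Ordinal l3)]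
    = map pos [:: Ordinal l0; Ordinal l1; Ordinal l2; Ordinal l3] by [].
  by rewrite (map_inj_uniq inj).
by exists b; split => //; apply: hb.
Qed.

Lemma coreF (C : fieldType) (B : seq 'M[C]_2) n (F : sig C (n.*2)) M1 M2 :
  (forall M, M \in B -> is_diag_mx M /\ M \in unitmx) ->
  M1 \in B -> M2 \in B -> lin_indep2 M1 M2 -> (3 <= n)%N ->
  (forall (k : nat) (g : sig C k), (k < n.*2)%N -> realizable F B g -> inLamBrack B g) ->
  ~ (exists x y z w : 'I_(n.*2),
    [/\ uniq [:: x; y; z; w] &
      exists a : {ffun 'I_(n.*2) -> bool},
        [/\ a x = false, a y = false, a z = false, a w = false & F a != 0]]) ->
  forall i j : 'I_(n.*2), i != j -> forall b : {ffun 'I_(n.*2) -> bool}, b i = b j -> F b = 0.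
Proof.
move=> HB H1 H2 ind hn Hreal nex i j hij b bij.
have [pos pP] := posE hij.
have hK : ((n.*2).-2 < n.*2)%N by move: hn; rewrite -muln2 -!subn1; lia.
have K4 : (4 <= (n.*2).-2)%N by move: hn; rewrite -muln2 -!subn1; lia.
have gz : forall M, M \in B -> forall x : {ffun 'I_((n.*2).-2) -> bool},
    mxfun M false false * F (aG pos i j x false false) +
    mxfun M true true * F (aG pos i j x true true) = 0.
  move=> M MB x.
  have [lam [f [fB eg]]] := Hreal _ _ hK (realG F hij MB (HB M MB).1 pP).
  have g0 := eg [ffun => false].
  have z : forall c, F (aG pos i j [ffun => false] c c) = 0.
    by move=> c; apply: (zeroF K4 pP nex) => t _; rewrite aG_pos // ffunE.
  rewrite !z in g0.
  rewrite !mulr0 addr0 in g0.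
  have lam0 : lam = 0.
    by move/esym/eqP: g0; rewrite mulf_eq0 (negbTE (brack0 HB fB)) orbF => /eqP.
  by rewrite eg lam0 mul0r.
have [d1 u1] := HB _ H1; have [d2 _] := HB _ H2.
have [x ex] : exists x, b = aG pos i j x (b i) (b i).
  exists [ffun t => b (pos t)]; apply/ffunP => u; rewrite ffunE.
  case: (eqVneq u i) => [->//|ui]; case: (eqVneq u j) => [->//|uj].
  have [inj _ sur] := pP; have [t <-] := sur u ui uj.
  apply/esym/existsP; case: ifP => bt.
    by exists t; rewrite eqxx ffunE.
  by case=> t' /andP[/eqP/inj -> ]; rewrite ffunE bt.
have [X0 Y0] := solve2 d1 d2 (diag00 d1 u1) ind (gz _ H1 x) (gz _ H2 x).
by rewrite ex; case: (b i).
Qed.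

Local Open Scope complex_scope.
Unset Implicit Arguments.

Theorem mainTheorem14 (R : realType) (B : seq 'M[R[i]]_2) (n : nat)
    (F : sig R[i] (n.*2)) :
  finite_cyclic_diag_group B ->
  (3 <= size B)%N ->
  (exists M1 M2 M3, [/\ M1 \in B, M2 \in B & M3 \in B] /\
     [/\ lin_indep2 M1 M2, lin_indep2 M1 M3 & lin_indep2 M2 M3]) ->
  (3 <= n)%N ->
  (forall (k : nat) (g : sig R[i] k), (k < n.*2)%N ->
     realizable F B g -> inLamBrack B g) ->
  (forall x, F x = 0) \/
  exists x y z w : 'I_(n.*2),
    [/\ uniq [:: x; y; z; w] &
      exists a : {ffun 'I_(n.*2) -> bool},
        [/\ a x = false, a y = false, a z = false, a w = false & F a != 0]].
Proof.
move=> [_ [HB _]] _ [M1 [M2 [M3 [[H1 H2 _] [ind _ _]]]]] hn Hreal.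
case: (classic (exists x y z w : 'I_(n.*2),
    [/\ uniq [:: x; y; z; w] &
      exists a : {ffun 'I_(n.*2) -> bool},
        [/\ a x = false, a y = false, a z = false, a w = false & F a != 0]])) => [ex|nex].
  by right.
left => b.
have core := coreF HB H1 H2 ind hn Hreal nex.
have l0 : (0 < n.*2)%N by move: hn; rewrite -muln2; lia.
have l1 : (1 < n.*2)%N by move: hn; rewrite -muln2; lia.
have l2 : (2 < n.*2)%N by move: hn; rewrite -muln2; lia.
set o0 := Ordinal l0; set o1 := Ordinal l1; set o2 := Ordinal l2.
case e0: (b o0); case e1: (b o1); case e2: (b o2).
- by apply: (core o0 o1) => //; rewrite e0 e1.
- by apply: (core o0 o1) => //; rewrite e0 e1.
- by apply: (core o0 o2) => //; rewrite e0 e2.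
- by apply: (core o1 o2) => //; rewrite e1 e2.
- by apply: (core o1 o2) => //; rewrite e1 e2.
- by apply: (core o0 o2) => //; rewrite e0 e2.
- by apply: (core o0 o1) => //; rewrite e0 e1.
- by apply: (core o0 o1) => //; rewrite e0 e1.
Qed.
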